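(* For every integer $n\ge 0$ let $\mathcal P_n$ be the complex vector space of polynomials $p(\xi_1,\ldots,\xi_n|\eta_1,\ldots,\eta_n)$ that are homogeneous of weighted degree $n$, where the variables $\xi_i$ and $\eta_i$ are assigned weight $i$, and that satisfy the following condition: for every integer $N\ge0$ and every $k\in\frac12\mathbb Z$ with $N/2+k$ and $N/2-k$ non-negative integers, the polynomials $$P^{[p]}_{N,k}(X|Y)=p\bigl(S_1(X),\ldots,S_n(X)\,\big|\,S_1(Y),\ldots,S_n(Y)\bigr),\qquad X=(x_1,\ldots,x_{N/2+k}),\ Y=(y_1,\ldots,y_{N/2-k}),$$ where $S_r(X)=\sum_i x_i^r$ denotes the $r$-th power sum, satisfy $$P^{[p]}_{N+2,k}(X,-x\,|\,x,Y)=P^{[p]}_{N,k}(X|Y)$$ identically in all variables (on the left, the first group of variables is $(x_1,\ldots,x_{N/2+k},-x)$ and the second is $(x,y_1,\ldots,y_{N/2-k})$). Then $$\sum_{n=0}^\infty q^n\dim\mathcal P_n=\prod_{k=1}^\infty\frac1{1-q^k}.$$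
   Context: The right-hand side is the generating function of the number of integer partitions, i.e. the character of the Fock module of a single Heisenberg algebra. *)

(* Defs.v *)
From HB Require Import structures.
From mathcomp Require Import all_boot all_order all_algebra.
From mathcomp Require Import mpoly.
Set Implicit Arguments. Unset Strict Implicit. Unset Printing Implicit Defensive.
Import Order.TTheory GRing.Theory Num.Theory.
Local Open Scope ring_scope.

(* Polynomials p(xi_1..xi_n | eta_1..eta_n) are elements of {mpoly F[n + n]}:
   the variable with index (lshift n i), i : 'I_n, is xi_(i+1), and the
   variable with index (rshift n i) is eta_(i+1). *)

Definition var_weight (n : nat) (j : 'I_(n + n)) : nat :=
  match split j with inl i => i.+1 | inr i => i.+1 end.

Definition wdeg (n : nat) (m : 'X_{1.. n + n}) : nat :=
  (\sum_(j : 'I_(n + n)) var_weight j * m j)%N.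

Definition wt_homog (F : fieldType) (n d : nat) (p : {mpoly F[n + n]}) : Prop :=
  forall m, m \in msupp p -> wdeg m = d.

Definition psum (F : fieldType) (r : nat) (X : seq F) : F :=
  \sum_(z <- X) z ^+ r.

Definition psum_point (F : fieldType) (n : nat) (X Y : seq F) : 'I_(n + n) -> F :=
  fun j => match split j with
           | inl i => psum i.+1 X
           | inr i => psum i.+1 Y
           end.

(* P^{[p]}_{N,k}(X|Y), with size X = N/2 + k and size Y = N/2 - k *)
Definition Pfun (F : fieldType) (n : nat) (p : {mpoly F[n + n]}) (X Y : seq F) : F :=
  p.@[psum_point X Y].

(* the stability condition P_{N+2,k}(X,-x | x,Y) = P_{N,k}(X|Y), for all N, k
   (i.e. all sizes of X and Y) and all values of the variables *)
Definition stable (F : fieldType) (n : nat) (p : {mpoly F[n + n]}) : Prop :=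
  forall (X Y : seq F) (x : F), Pfun p (rcons X (- x)) (x :: Y) = Pfun p X Y.

Definition Pspace (F : fieldType) (n : nat) (p : {mpoly F[n + n]}) : Prop :=
  @wt_homog F n n p /\ stable p.

Definition lin_indep (F : fieldType) (V : lmodType F) (d : nat) (f : 'I_d -> V) : Prop :=
  forall c : 'I_d -> F, \sum_(i < d) c i *: f i = 0 -> forall i, c i = 0.

Definition has_dim (F : fieldType) (V : lmodType F) (S : V -> Prop) (d : nat) : Prop :=
  (exists f : 'I_d -> V, (forall i, S (f i)) /\ lin_indep f) /\
  (forall f : 'I_d.+1 -> V, (forall i, S (f i)) -> ~ lin_indep f).

(* coefficient of q^n in prod_{k>=1} 1/(1 - q^k), computed (exactly) from the
   truncation prod_{k=1}^{n} sum_{j=0}^{n} q^(k j): the factors with k > n and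
   the terms q^(kj) with kj > n do not contribute to the coefficient of q^n. *)
Definition euler_poly (n : nat) : {poly nat} :=
  (\prod_(1 <= k < n.+1) \sum_(j < n.+1) 'X^(k * j))%R.

Definition euler_coef (n : nat) : nat := nth 0%N (polyseq (euler_poly n)) n.

(* Main.v *)
Require Import Defs.
From HB Require Import structures.
From mathcomp Require Import all_boot all_order all_algebra.
From mathcomp Require Import mpoly.
From mathcomp Require Import ring cyclic separable cyclotomic.
Set Implicit Arguments. Unset Strict Implicit. Unset Printing Implicit Defensive.
Import Order.TTheory GRing.Theory Num.Theory.
Local Open Scope ring_scope.

Section Roots.
Variable F : numClosedFieldType.

Lemma prim_root_exists k : (k > 0)%N -> exists z : F, k.-primitive_root z.
Proof.
pose p : {poly F} := 'X^k - 1; have [r Dp] := closed_field_poly_normal p.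
move=> k_gt0; rewrite (monicP _) ?monicXnsubC // scale1r in Dp.
have rn1: all k.-unity_root r by apply/allP=> z; rewrite -root_prod_XsubC -Dp.
have sz_r: (k < (size r).+1)%N.
  by rewrite -(size_prod_XsubC r id) -Dp size_XnsubC.
have [|z] := hasP (has_prim_root k_gt0 rn1 _ sz_r); last by exists z.
by rewrite -separable_prod_XsubC -Dp separable_Xn_sub_1 // pnatr_eq0 -lt0n.
Qed.

Lemma psum_cat r (X Y : seq F) : psum r (X ++ Y) = psum r X + psum r Y.
Proof. by rewrite /psum big_cat. Qed.
Lemma psum_cons r x (X : seq F) : psum r (x :: X) = x ^+ r + psum r X.
Proof. by rewrite /psum big_cons. Qed.
Lemma psum_rcons r x (X : seq F) : psum r (rcons X x) = psum r X + x ^+ r.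
Proof. by rewrite -cats1 psum_cat /psum big_seq1. Qed.
Lemma psum_nil r : psum r ([::] : seq F) = 0.
Proof. by rewrite /psum big_nil. Qed.
Lemma psum_perm r (X Y : seq F) : perm_eq X Y -> psum r X = psum r Y.
Proof. by move=> h; rewrite /psum (perm_big _ h). Qed.
Lemma psum_opp r (X : seq F) : psum r (map -%R X) = (-1) ^+ r * psum r X.
Proof. rewrite /psum big_map mulr_sumr; by apply: eq_bigr => x _; rewrite -(mulN1r x) exprMn. Qed.

(* the list c * w^j, j < k *)
Lemma psum_rootlist k (c : F) : (k > 0)%N -> exists L : seq F,
  (forall r, (0 < r < k)%N -> psum r L = 0) /\ psum k L = k%:R * c ^+ k.
Proof.
move=> k0; have [w pw] := prim_root_exists k0.
exists [seq c * w ^+ j | j <- iota 0 k]; split.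
  move=> r /andP [r0 rk].
  rewrite /psum big_map.
  under eq_bigr => j _ do rewrite exprMn -exprM mulnC exprM.
  rewrite -mulr_sumr.
  have wr1 : w ^+ r != 1.
    by rewrite -(prim_order_dvd pw); apply/negP => /(dvdn_leq r0); rewrite leqNgt rk.
  suff -> : \sum_(i <- iota 0 k) (w ^+ r) ^+ i = 0 by rewrite mulr0.
  have : (w ^+ r) ^+ k - 1 = 0 by rewrite -exprM mulnC exprM (prim_expr_order pw) expr1n subrr.
  rewrite subrX1 => /eqP; rewrite mulf_eq0 subr_eq0 (negbTE wr1) /= => /eqP E.
  by rewrite -(big_mkord xpredT (fun i => (w ^+ r) ^+ i)) /index_iota subn0 in E.
rewrite /psum big_map.
under eq_bigr => j _ do rewrite exprMn -exprM mulnC exprM (prim_expr_order pw) expr1n mulr1.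
by rewrite big_const_seq count_predT size_iota iter_addr_0 mulr_natl. Qed.

Lemma psum_surj (a : nat -> F) m : exists Z : seq F, forall r, (0 < r <= m)%N -> psum r Z = a r.
Proof.
elim: m => [|m [Z HZ]]; first by exists [::] => r /andP [r0 r00]; move: r00; rewrite leqn0 => /eqP r00; move: r0; rewrite r00.
pose c := m.+1.-root ((a m.+1 - psum m.+1 Z) / m.+1%:R).
have [L [L0 L1]] := psum_rootlist c (ltn0Sn m).
exists (Z ++ L) => r /andP [r0]; rewrite leq_eqVlt ltnS => /orP [/eqP -> | rm].
  rewrite psum_cat L1 /c rootCK // mulrC divfK; first by rewrite addrC subrK.
  by rewrite pnatr_eq0.
by rewrite psum_cat L0 ?addr0 ?HZ ?r0 // ltnS rm.
Qed.
End Roots.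

Section Zero.
Variable F : numClosedFieldType.

Lemma poly_eq0_all (r : {poly F}) : (forall x, r.[x] = 0) -> r = 0.
Proof.
move=> h; apply: (@roots_geq_poly_eq0 _ _ [seq i%:R | i <- iota 0 (size r)]).
- by apply/allP => x _; rewrite /root h.
- by rewrite map_inj_uniq ?iota_uniq // => i j /eqP; rewrite eqr_nat => /eqP.
- by rewrite size_map size_iota.
Qed.

Definition extv k (v : 'I_k -> F) (x : F) : 'I_k.+1 -> F :=
  fun i => if unlift ord_max i is Some j then v j else x.

Lemma extv_widen k v x (i : 'I_k) : extv v x (widen_ord (leqnSn k) i) = v i.
Proof.
have -> : widen_ord (leqnSn k) i = lift ord_max i by apply/val_inj; rewrite /= /bump leqNgt ltn_ord.
by rewrite /extv liftK.
Qed.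

Lemma extv_max k v x : extv (k := k) v x ord_max = x.
Proof. by rewrite /extv unlift_none. Qed.

Lemma meval_muni k (p : {mpoly F[k.+1]}) v x :
  p.@[extv v x] = (map_poly (meval v) (muni p)).[x].
Proof.
rewrite muniE mevalE raddf_sum /= horner_sum; apply: eq_bigr => m _.
rewrite map_polyZ map_polyXn hornerZ hornerXn.
rewrite /= mevalZ mevalX big_ord_recr /= extv_max mulrA; congr (_ * _ * _).
by apply: eq_bigr => i _; rewrite extv_widen mnmE.
Qed.
End Zero.

Section Zero2.
Variable F : numClosedFieldType.

Definition mw k (m : 'X_{1..k.+1}) : 'X_{1..k} := [multinom m (widen_ord (leqnSn k) i) | i < k].

Lemma mw_eq k (m m' : 'X_{1..k.+1}) : (mw m' == mw m) && (m' ord_max == m ord_max) = (m' == m).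
Proof.
apply/idP/eqP => [/andP [/eqP e1 /eqP e2]|->]; last by rewrite !eqxx.
apply/mnmP => i; case: (unliftP ord_max i) => [j ->|->] //.
have -> : lift ord_max j = widen_ord (leqnSn k) j by apply/val_inj; rewrite /= /bump leqNgt ltn_ord.
by move/mnmP: e1 => /(_ j); rewrite !mnmE.
Qed.

Lemma mcoeff_muni k (p : {mpoly F[k.+1]}) m : ((muni p)`_(m ord_max))@_(mw m) = p@_m.
Proof.
rewrite muniE coef_sum raddf_sum /=.
under eq_bigr => mm _ do rewrite coefZ coefXn mulr_natr mcoeffMn mcoeffZ mcoeffX -mulrnAr -mulrnA mulnb -/(mw mm) (eq_sym (m ord_max)) mw_eq.
rewrite [in RHS](mpolyE p) raddf_sum /=; apply: eq_bigr => m' _.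
by rewrite mcoeffZ mcoeffX mulr_natr.
Qed.

Lemma meval_eq0 k (p : {mpoly F[k]}) : (forall v, p.@[v] = 0) -> p = 0.
Proof.
elim: k p => [|k IH] p h.
  have E : forall m : 'X_{1..0}, m = 0%MM by move=> m; apply/mnmP => -[].
  have h0 := h (fun _ => 0); rewrite mevalE in h0.
  apply/mpolyP => m; rewrite mcoeff0 (E m).
  rewrite [in LHS](mpolyE p) raddf_sum /= -[RHS]h0; apply: eq_bigr => m' _.
  by rewrite mcoeffZ mcoeffX big_ord0 (E m') eqxx.
apply/mpolyP => m; rewrite mcoeff0 -mcoeff_muni.
suff -> : muni p = 0 by rewrite coef0 mcoeff0.
apply/polyP => j; rewrite coef0; apply: IH => v.
have : map_poly (meval v) (muni p) = 0 by apply: poly_eq0_all => x; rewrite -meval_muni h.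
by move/polyP => /(_ j); rewrite coef_map coef0.
Qed.
End Zero2.

Section Stab.
Variable F : numClosedFieldType.
Variable n : nat.

Definition pt (a b : 'I_n -> F) : 'I_(n + n) -> F :=
  fun j => match split j with inl i => a i | inr i => b i end.

Lemma pt_all (v : 'I_(n + n) -> F) : v =1 pt (fun i => v (lshift n i)) (fun i => v (rshift n i)).
Proof.
move=> j; rewrite /pt; case E: (split j) => [i|i]; by rewrite -{1}(splitK j) E.
Qed.

Lemma Pfun_perm (p : {mpoly F[n + n]}) X Y Y' : perm_eq Y Y' -> Pfun p X Y = Pfun p X Y'.
Proof.
move=> h; apply: meval_eq => j; rewrite /psum_point; case: (split j) => // i.
exact: psum_perm.
Qed.

Lemma stable_cat (p : {mpoly F[n + n]}) : stable p ->
  forall Z X Y, Pfun p (X ++ map -%R Z) (Z ++ Y) = Pfun p X Y.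
Proof.
move=> st; elim => [|z Z IH] X Y; first by rewrite cats0.
rewrite /= -cat_rcons.
have P : perm_eq (z :: Z ++ Y) (Z ++ z :: Y) by rewrite -[z :: Z ++ Y]/([:: z] ++ Z ++ Y) (perm_catCA [:: z] Z Y) perm_refl.
rewrite (Pfun_perm _ _ P) IH.
exact: st.
Qed.

Lemma stable_trans (p : {mpoly F[n + n]}) : stable p -> forall a b c : 'I_n -> F,
  p.@[pt (fun i => a i + (-1) ^+ i.+1 * c i) (fun i => b i + c i)] = p.@[pt a b].
Proof.
move=> st a b c.
pose ext (f : 'I_n -> F) (r : nat) := if insub r.-1 is Some i then f i else 0.
have extE f (i : 'I_n) : ext f i.+1 = f i by rewrite /ext /= valK.
have [X HX] := psum_surj (ext a) n.
have [Y HY] := psum_surj (ext b) n.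
have [Z HZ] := psum_surj (ext c) n.
have H (f : 'I_n -> F) W : (forall r, (0 < r <= n)%N -> psum r W = ext f r) -> forall i : 'I_n, psum i.+1 W = f i.
  by move=> hW i; rewrite hW ?extE //= ltn_ord.
have -> : p.@[pt a b] = Pfun p X Y.
  by apply: meval_eq => j; rewrite /pt /psum_point; case: (split j) => i; rewrite ?(H a X HX) ?(H b Y HY).
rewrite -(stable_cat st Z X Y); apply: meval_eq => j; rewrite /pt /psum_point.
by case: (split j) => i; rewrite psum_cat ?psum_opp ?(H a X HX) ?(H b Y HY) (H c Z HZ) // addrC.
Qed.

Lemma stable_red (p : {mpoly F[n + n]}) : stable p -> forall a b : 'I_n -> F,
  p.@[pt a b] = p.@[pt (fun i => a i - (-1) ^+ i.+1 * b i) (fun _ => 0)].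
Proof.
move=> st a b; rewrite -[RHS](stable_trans st _ _ b); apply: meval_eq => j; rewrite /pt.
by case: (split j) => i; rewrite ?subrK ?add0r.
Qed.

End Stab.

Section Key.
Variable F : numClosedFieldType.
Variable n : nat.

Definition wt (f : {ffun 'I_n -> 'I_n.+1}) : nat := (\sum_(i < n) i.+1 * f i)%N.

Definition mon (f : {ffun 'I_n -> 'I_n.+1}) : 'X_{1..n + n} :=
  [multinom (match split j with inl i => nat_of_ord (f i) | inr _ => 0%N end) | j < n + n].

Lemma split_l (i : 'I_n) : split (lshift n i) = inl i.
Proof. exact: (unsplitK (inl i)). Qed.
Lemma split_r (i : 'I_n) : split (rshift n i) = inr i.
Proof. exact: (unsplitK (inr i)). Qed.

Lemma wdeg_split (m : 'X_{1..n + n}) :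
  wdeg m = (\sum_(i < n) i.+1 * m (lshift n i) + \sum_(i < n) i.+1 * m (rshift n i))%N.
Proof.
by rewrite /wdeg big_split_ord /=; congr (_ + _)%N; apply: eq_bigr => i _; rewrite /var_weight ?split_l ?split_r.
Qed.

Lemma key_zero (p : {mpoly F[n + n]}) : Pspace p ->
  (forall f, wt f = n -> p@_(mon f) = 0) -> p = 0.
Proof.
move=> [hom st] h0; apply: meval_eq0 => v.
rewrite (meval_eq p (pt_all v)) (stable_red st) mevalE.
apply: big1_seq => m /andP [_ ms].
case: (boolP [exists i : 'I_n, m (rshift n i) != 0%N]) => [/existsP [i mi]|].
  rewrite (bigD1 (rshift n i)) //= /pt split_r expr0n (negbTE mi).
  by rewrite !mul0r mulr0.
rewrite negb_exists => /forallP mz.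
have mz' i : m (rshift n i) = 0%N by apply/eqP; have := mz i; rewrite negbK.
have wm : wdeg m = n := hom m ms.
have le i : (m (lshift n i) < n.+1)%N.
  rewrite ltnS; apply: (@leq_trans (wdeg m)); last by rewrite wm.
  rewrite wdeg_split (bigD1 i) //= -addnA.
  by apply: leq_trans (leq_addr _ _); rewrite mulSn leq_addr.
pose f : {ffun 'I_n -> 'I_n.+1} := [ffun i => Ordinal (le i)].
have -> : m = mon f.
  apply/mnmP => j; rewrite mnmE -{1}(splitK j); case: (split j) => i /=.
    by rewrite ffunE.
  by rewrite mz'.
rewrite h0 ?mul0r //.
apply: (etrans _ wm); rewrite wdeg_split [X in (_ + X)%N]big1 ?addn0; last by move=> i _; rewrite mz' muln0.
by apply: eq_bigr => i _; rewrite ffunE.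
Qed.
End Key.

Section Upper.
Variable F : numClosedFieldType.
Variable n : nat.

Definition Aset : {set {ffun 'I_n -> 'I_n.+1}} := [set g | wt g == n].

Lemma Pspace_comb d (f : 'I_d -> {mpoly F[n + n]}) (c : 'I_d -> F) :
  (forall i, Pspace (f i)) -> Pspace (\sum_(i < d) c i *: f i).
Proof.
move=> hf; split.
  move=> m /msupp_sum_le /flattenP [s /mapP [i _ ->]] /msuppZ_le ms.
  by have [h _] := hf i; apply: h.
move=> X Y x; rewrite /Pfun !raddf_sum /=; apply: eq_bigr => i _.
by rewrite !mevalZ; have [_ h] := hf i; rewrite -[meval _ (f i)]/(Pfun _ _ _) h.
Qed.

Lemma upper (f : 'I_#|Aset|.+1 -> {mpoly F[n + n]}) :
  (forall i, Pspace (f i)) -> ~ lin_indep f.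
Proof.
move=> hf li.
pose M : 'M[F]_(#|Aset|.+1, #|Aset|) := \matrix_(i, j) (f i)@_(mon (enum_val j)).
pose K := kermx M.
have Knz : K != 0.
  rewrite -mxrank_eq0 mxrank_ker subn_eq0 -ltnNge ltnS; exact: rank_leq_col.
have [i0 Hi0] : exists i, row i K != 0.
  case: (pickP [pred i | row i K != 0]) => [i hi|h]; first by exists i.
  move: Knz; suff -> : K = 0 by rewrite eqxx.
  by apply/row_matrixP => i; rewrite row0; have := h i; rewrite /= => /negbFE/eqP.
pose c := row i0 K.
have cM : c *m M = 0 by rewrite /c -row_mul mulmx_ker row0.
have g0 : \sum_(i < #|Aset|.+1) c 0 i *: f i = 0.
  apply: key_zero; first by apply: Pspace_comb.
  move=> h wh.
  have hA : h \in Aset by rewrite inE wh.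
  have := congr1 (fun A : 'M[F]_(1, #|Aset|) => A 0 (enum_rank_in hA h)) cM.
  rewrite !mxE raddf_sum /= => E; rewrite -[RHS]E; apply: eq_bigr => i _.
  by rewrite mcoeffZ !mxE enum_rankK_in.
suff c0 : c = 0 by move: Hi0; rewrite -/c c0 eqxx.
apply/rowP => j; rewrite [RHS]mxE; have := li _ g0 j; by rewrite [c 0 j]/= => ->.
Qed.
End Upper.

Section Lower.
Variable F : numClosedFieldType.
Variable n : nat.

Lemma wdegD (m1 m2 : 'X_{1..n + n}) : wdeg (m1 + m2) = (wdeg m1 + wdeg m2)%N.
Proof. by rewrite /wdeg -big_split; apply: eq_bigr => j _; rewrite mnmDE mulnDr. Qed.

Lemma wt_homogM d e (p q : {mpoly F[n + n]}) :
  wt_homog d p -> wt_homog e q -> wt_homog (d + e) (p * q).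
Proof.
by move=> hp hq m /msuppM_le /allpairsP [[m1 m2] [/= h1 h2 ->]]; rewrite wdegD hp ?hq.
Qed.

Lemma wt_homog1 : wt_homog 0 (1 : {mpoly F[n + n]}).
Proof.
by move=> m; rewrite msupp1 inE => /eqP ->; rewrite /wdeg big1 // => j _; rewrite mnm0E muln0.
Qed.

Lemma wt_homogD d (p q : {mpoly F[n + n]}) :
  wt_homog d p -> wt_homog d q -> wt_homog d (p + q).
Proof. by move=> hp hq m /msuppD_le; rewrite mem_cat => /orP [/hp|/hq]. Qed.

Lemma wt_homogZ d c (p : {mpoly F[n + n]}) : wt_homog d p -> wt_homog d (c *: p).
Proof. by move=> hp m /msuppZ_le /hp. Qed.

Lemma wt_homogX (j : 'I_(n + n)) : wt_homog (var_weight j) ('X_j : {mpoly F[n + n]}).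
Proof.
move=> m; rewrite msuppX inE => /eqP ->; rewrite /wdeg (bigD1 j) //= mnm1E eqxx muln1 big1 ?addn0 //.
by move=> i ij; rewrite mnm1E eq_sym (negbTE ij) muln0.
Qed.

Lemma wt_homogXn d k (p : {mpoly F[n + n]}) : wt_homog d p -> wt_homog (d * k) (p ^+ k).
Proof.
move=> hp; elim: k => [|k IH]; first by rewrite muln0 expr0; exact: wt_homog1.
by rewrite exprS mulnS; apply: wt_homogM.
Qed.

Definition zeta (i : 'I_n) : {mpoly F[n + n]} :=
  'X_(lshift n i) + (- (-1) ^+ i.+1) *: 'X_(rshift n i).

Definition Pg (g : {ffun 'I_n -> 'I_n.+1}) : {mpoly F[n + n]} :=
  \prod_(i < n) zeta i ^+ g i.

Lemma wt_homog_Pg g : wt_homog (wt g) (Pg g).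
Proof.
rewrite /Pg /wt; elim/big_rec2: _ => [|i p d _ hp]; first exact: wt_homog1.
apply: wt_homogM => //; apply: wt_homogXn; apply: wt_homogD.
  by have := @wt_homogX (lshift n i); rewrite /var_weight split_l.
by apply: wt_homogZ; have := @wt_homogX (rshift n i); rewrite /var_weight split_r.
Qed.

Lemma meval_Pg g v : (Pg g).@[v] =
  \prod_(i < n) (v (lshift n i) - (-1) ^+ i.+1 * v (rshift n i)) ^+ g i.
Proof.
rewrite /Pg rmorph_prod; apply: eq_bigr => i _.
by rewrite rmorphXn /zeta rmorphD /= mevalZ !mevalXU mulNr.
Qed.

Lemma stable_Pg g : stable (Pg g).
Proof.
move=> X Y x; rewrite /Pfun !meval_Pg; apply: eq_bigr => i _.
rewrite /psum_point !split_l !split_r psum_rcons psum_cons.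
congr (_ ^+ _); rewrite -(mulN1r x) exprMn; ring.
Qed.

Definition mm (g : {ffun 'I_n -> 'I_n.+1}) : 'X_{1..n} := [multinom (nat_of_ord (g i)) | i < n].

Lemma mm_inj : injective mm.
Proof.
move=> g h /mnmP e; apply/ffunP => i; apply/val_inj; by have := e i; rewrite !mnmE.
Qed.

Lemma lower_indep : lin_indep (fun j : 'I_#|Aset n| => Pg (enum_val j)).
Proof.
move=> c hc j.
pose Q : {mpoly F[n]} := \sum_(k < #|Aset n|) c k *: 'X_[mm (enum_val k)].
have Q0 : Q = 0.
  apply: meval_eq0 => a.
  have := congr1 (meval (pt a (fun _ => 0))) hc; rewrite raddf_sum meval0 /= => <-.
  rewrite /Q raddf_sum /=; apply: eq_bigr => k _; rewrite !mevalZ mevalX meval_Pg.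
  congr (_ * _); apply: eq_bigr => i _; rewrite /pt split_l split_r mulr0 subr0 mnmE //.
have := congr1 (mcoeff (mm (enum_val j))) Q0; rewrite mcoeff0 /Q raddf_sum /= (bigD1 j) //=.
rewrite mcoeffZ mcoeffX eqxx mulr1 big1 ?addr0 // => k kj.
rewrite mcoeffZ mcoeffX; case: eqP => [/mm_inj/enum_val_inj e|]; last by rewrite mulr0.
by move: kj; rewrite e eqxx.
Qed.

End Lower.

Lemma card_Aset n : #|Aset n| = euler_coef n.
Proof.
rewrite /euler_coef /euler_poly big_add1 /= big_mkord.
rewrite (bigA_distr_bigA (fun (i : 'I_n) (j : 'I_n.+1) => 'X^(i.+1 * j) : {poly nat})).
under eq_bigr => f _ do rewrite prodrXr.
rewrite -[nth _ _ _]/((_ : {poly nat})`_n) coef_sum.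
under eq_bigr => f _ do rewrite coefXn natn.
rewrite -sum1_card big_mkcond /=; apply: eq_bigr => f _.
by rewrite inE /wt eq_sym; case: (_ == _).
Qed.

Theorem theorem1 (F : numClosedFieldType) (n : nat) :
  has_dim (@Pspace F n) (euler_coef n).
Proof.
rewrite -card_Aset; split.
  exists (fun j => Pg F (enum_val j)); split; last exact: lower_indep.
  move=> j; split; last exact: stable_Pg.
  have := enum_valP j; rewrite inE => /eqP e; have := @wt_homog_Pg F n (enum_val j); by rewrite e.
by move=> f hf; apply: upper.
Qed.
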